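(* Let $l$ be an abstract lock object, $t\neq t'$ threads, $x$ a global client variable, $u,v,n$ values, and ${\tt m}\in\{{\tt Acquire},{\tt Release}\}$. For every state that is reachable from an initial state, the following atomic Hoare triples hold (a triple $\{p\}\,S\,\{q\}$ for an atomic step $S$ means: whenever $p$ holds in a (client state, library state) pair and the step $S$ transforms it into a new pair, $q$ holds in the new pair): (1) $\{\mathbf{H}_{l.release_u}\}\ {\tt l.Acquire}(v)_t\ \{v>u+1\}$; (2) $\{\mathbf{H}_{l.release_u}\}\ {\tt l.m}(v)_t\ \{\mathbf{H}_{l.release_u}\}$; (3) $\{[l.release_u]_t\}\ {\tt l.Acquire}(v)_t\ \{[l.acquire_{u+1}]_t\}$; (4) $\{[x=u]_t\}\ {\tt l.m}(v)_{t'}\ \{[x=u]_t\}$; (5) $\{\langle l.release_u\rangle[x=n]_t\}\ {\tt l.Acquire}(v)_t\ \{v=u+1\Rightarrow [x=n]_t\}$; (6) $\{\neg\langle l.release_u\rangle_{t'}\wedge [x=v]_t\}\ {\tt l.Release}(u)_t\ \{\langle l.release_u\rangle[x=v]_{t'}\}$.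
   Context: Memory model (RC11 RAR with views). Timestamps are rationals. A component state $\sigma$ (the client state $\gamma$ or the library state $\beta$) consists of: a set $\sigma.\mathtt{ops}\subseteq Act\times\mathbb{Q}$ of operations with timestamps (writes $wr(x,n)$, releasing writes $wr^{R}(x,n)$, updates $upd^{RA}(x,m,n)$, or abstract object operations such as $l.init_0$, $l.acquire_n(t)$, $l.release_n$); a set $\sigma.\mathtt{cvd}\subseteq\sigma.\mathtt{ops}$ of covered operations; for each thread $t$ a thread view $\sigma.{\tt tview}_t$ mapping each variable/object of that component to an element of $\sigma.\mathtt{ops}$ on it; and for each $w\in\sigma.\mathtt{ops}$ a modification view $\sigma.{\tt mview}_w$ mapping variables of both components to timestamped operations. For $(a,q)$: ${\tt tst}(a,q)=q$, $var(a)$ is its variable/object, $wrval(a)$ the value written. $\sigma.\mathtt{Obs}(t,x)=\{(a,q)\in\sigma.\mathtt{ops}\mid var(a)=x\wedge {\tt tst}(\sigma.{\tt tview}_t(x))\le q\}$. $maxTS(o,\sigma)$ is the largest timestamp of an operation on $o$ in $\sigma.\mathtt{ops}$. For views, $(V_1\otimes V_2)(x)$ is $V_1(x)$ if ${\tt tst}(V_2(x))\le{\tt tst}(V_1(x))$ and $V_2(x)$ otherwise ($x\in dom(V_1)$). Client writes (relaxed client accesses) follow: a write $a=wr^{[R]}(x,n)$ by $t$ picks $(w,q)\in\gamma.\mathtt{Obs}(t,x)\setminus\gamma.\mathtt{cvd}$ and a fresh $q'$ ($q<q'$ and $q'<{\tt tst}(w')$ for every $w'\in\gamma.\mathtt{ops}$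 with $q<{\tt tst}(w')$), adds $(a,q')$ to $\mathtt{ops}$, sets ${\tt tview}_t:={\tt tview}_t[x:=(a,q')]$ and ${\tt mview}_{(a,q')}:=$ new ${\tt tview}_t\cup\beta.{\tt tview}_t$. Abstract lock $l$: initially the library state has $\mathtt{ops}=\{(l.init_0,0)\}$, ${\tt tview}_t(l)=(l.init_0,0)$ for all $t$, $\mathtt{cvd}=\emptyset$. Step ${\tt l.Acquire}(n)_t$ (returns true): requires $(w,q)\in\beta.\mathtt{ops}$ with $w\in\{l.init_0,l.release_{n-1}\}$, $q=maxTS(l,\beta)$; chooses $q'>q$; with $b=l.acquire_n(t)$ it sets $\beta.\mathtt{ops}:=\beta.\mathtt{ops}\cup\{(b,q')\}$, $\beta.\mathtt{cvd}:=\beta.\mathtt{cvd}\cup\{(w,q)\}$, $\beta.{\tt tview}_t:=\beta.{\tt tview}_t[l:=(b,q')]\otimes\beta.{\tt mview}_{(w,q)}$, $\gamma.{\tt tview}_t:=\gamma.{\tt tview}_t\otimes\beta.{\tt mview}_{(w,q)}$, and $\beta.{\tt mview}_{(b,q')}:=$ new $\beta.{\tt tview}_t\,\cup$ new $\gamma.{\tt tview}_t$. Step ${\tt l.Release}(n)_t$: requires $(l.acquire_{n-1}(t),q)\in\beta.\mathtt{ops}$ with $q=maxTS(l,\beta)$; chooses $q'>q$, adds $(l.release_n,q')$ to $\beta.\mathtt{ops}$, sets $\beta.{\tt tview}_t:=\beta.{\tt tview}_t[l:=(l.release_n,q')]$ and $\beta.{\tt mview}_{(l.release_n,q')}:=$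 new $\beta.{\tt tview}_t\cup\gamma.{\tt tview}_t$; the client state is unchanged. Lock operations are synchronising. Assertions (client assertions evaluated on $\gamma$, lock assertions on $\beta$): $last(W,x)$ is the element of $W$ on $x$ with largest timestamp; $dview(V,W,x)=n$ iff $V(x)=last(W,x)$ and $wrval(last(W,x))=n$. $[x=n]_t$ iff $dview(\gamma.{\tt tview}_t,\gamma.\mathtt{ops}\cap\text{writes},x)=n$. $\langle o.m\rangle_t$ iff $\exists q.(o.m,q)\in\beta.\mathtt{ops}\wedge q\ge{\tt tst}(\beta.{\tt tview}_t(o))$. $[o.m]_t$ iff ${\tt tst}(\beta.{\tt tview}_t(o))=maxTS(o,\beta)$ and $(o.m,maxTS(o,\beta))\in\beta.\mathtt{ops}$. $\langle o.m\rangle[y=v]_t$ iff $o.m$ is synchronising and for all $q$ with $(o.m,q)\in\beta.\mathtt{ops}$ and $q\ge{\tt tst}(\beta.{\tt tview}_t(o))$, $dview(\beta.{\tt mview}_{(o.m,q)},\gamma.\mathtt{ops},y)=v$. Hidden value $\mathbf{H}_{o.m}$ iff some $(o.m,q)\in\beta.\mathtt{ops}$ exists and every such $(o.m,q)$ is in $\beta.\mathtt{cvd}$. *)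

(* Defs.v *)
(* RC11 RAR with views, client + abstract-lock library. *)
From HB Require Import structures.
From mathcomp Require Import all_boot all_order all_algebra.
Set Implicit Arguments. Unset Strict Implicit. Unset Printing Implicit Defensive.
Import Order.TTheory GRing.Theory Num.Theory.
Local Open Scope ring_scope.

Definition thread := nat.
Definition value := nat.

(* Locations: client (global) variables and library objects (locks). *)
Inductive loc := CV of nat | LO of nat.

Definition loc_eq_dec : comparable loc.
Proof. move=> a b; rewrite /decidable; decide equality; apply: (@eq_comparable nat). Defined.
HB.instance Definition _ := hasDecEq.Build loc (compareP loc_eq_dec).

(* Actions: client writes wr(x,n), releasing writes wr^R(x,n), updates
   upd^RA(x,m,n); abstract lock operations o.acquire_n(t), o.release_n. *)
Inductive act :=
| Wr of nat & value
| WrR of nat & value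
| Upd of nat & value & value
| LAcquire of nat & nat & thread
| LRelease of nat & nat.

Definition act_eq_dec : comparable act.
Proof. move=> a b; rewrite /decidable; decide equality; apply: (@eq_comparable nat). Defined.
HB.instance Definition _ := hasDecEq.Build act (compareP act_eq_dec).

(* o.init_0 = o.release_0 *)
Definition LInit (o : nat) : act := LRelease o 0.

Definition var (a : act) : loc :=
  match a with
  | Wr x _ | WrR x _ | Upd x _ _ => CV x
  | LAcquire o _ _ | LRelease o _ => LO o
  end.

Definition wrval (a : act) : option value :=
  match a with
  | Wr _ n | WrR _ n | Upd _ _ n => Some n
  | _ => None
  end.

Definition is_write (a : act) : bool :=
  match a with Wr _ _ | WrR _ _ | Upd _ _ _ => true | _ => false end.

Definition is_releasing (a : act) : bool :=
  match a with WrR _ _ | Upd _ _ _ => true | _ => false end.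

Definition is_sync (a : act) : bool :=
  match a with
  | Wr _ _ => false
  | _ => true
  end.

Definition tsop := (act * rat)%type.
Definition tst (e : tsop) : rat := e.2.

Definition view := loc -> tsop.

(* component state (client state gamma or library state beta) *)
Record cstate := mkS {
  ops : tsop -> Prop;
  cvd : tsop -> Prop;
  tview : thread -> view;
  mview : tsop -> view }.

Definition Obs (s : cstate) (t : thread) (x : loc) (e : tsop) : Prop :=
  ops s e /\ var e.1 = x /\ tst (tview s t x) <= tst e.

Definition vupd (V : view) (x : loc) (e : tsop) : view :=
  fun y => if y == x then e else V y.
Definition vmerge (V1 V2 : view) : view :=
  fun y => if tst (V2 y) <= tst (V1 y) then V1 y else V2 y.
Definition vunion (Vc Vl : view) : view :=
  fun y => match y with CV _ => Vc y | LO _ => Vl y end.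
Definition tvupd (tv : thread -> view) (t : thread) (V : view) : thread -> view :=
  fun t0 => if t0 == t then V else tv t0.
Definition mvupd (mv : tsop -> view) (e : tsop) (V : view) : tsop -> view :=
  fun e0 => if e0 == e then V else mv e0.
Definition addop (S : tsop -> Prop) (e : tsop) : tsop -> Prop :=
  fun e0 => S e0 \/ e0 = e.

Definition fresh (s : cstate) (q q' : rat) : Prop :=
  q < q' /\ forall e, ops s e -> q < tst e -> q' < tst e.

Definition is_maxTS (s : cstate) (o : loc) (q : rat) : Prop :=
  (exists a, var a = o /\ ops s (a, q)) /\
  forall a q0, ops s (a, q0) -> var a = o -> q0 <= q.

(* A step relates (gamma, beta) to (gamma', beta'). *)
Definition stepRel := cstate -> cstate -> cstate -> cstate -> Prop.

Definition write_step (rel : bool) (t : thread) (x : nat) (n : value) : stepRel :=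
  fun g b g' b' =>
  exists w q q', Obs g t (CV x) (w, q) /\ ~ cvd g (w, q) /\ fresh g q q' /\
    let a := if rel then WrR x n else Wr x n in
    let tv := vupd (tview g t) (CV x) (a, q') in
    g' = mkS (addop (ops g) (a, q')) (cvd g) (tvupd (tview g) t tv)
             (mvupd (mview g) (a, q') (vunion tv (tview b t))) /\
    b' = b.

Definition read_step (acq : bool) (t : thread) (x : nat) (n : value) : stepRel :=
  fun g b g' b' =>
  exists w q, Obs g t (CV x) (w, q) /\ wrval w = Some n /\
    let sync := acq && is_releasing w in
    let tv0 := vupd (tview g t) (CV x) (w, q) in
    let tv := if sync then vmerge tv0 (mview g (w, q)) else tv0 in
    let btv := if sync then vmerge (tview b t) (mview g (w, q)) else tview b t in
    g' = mkS (ops g) (cvd g) (tvupd (tview g) t tv) (mview g) /\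
    b' = mkS (ops b) (cvd b) (tvupd (tview b) t btv) (mview b).

Definition update_step (t : thread) (x : nat) (m n : value) : stepRel :=
  fun g b g' b' =>
  exists w q q', Obs g t (CV x) (w, q) /\ ~ cvd g (w, q) /\ wrval w = Some m /\
    fresh g q q' /\
    let a := Upd x m n in
    let sync := is_releasing w in
    let tv0 := if sync then vmerge (tview g t) (mview g (w, q)) else tview g t in
    let tv := vupd tv0 (CV x) (a, q') in
    let btv := if sync then vmerge (tview b t) (mview g (w, q)) else tview b t in
    g' = mkS (addop (ops g) (a, q')) (addop (cvd g) (w, q)) (tvupd (tview g) t tv)
             (mvupd (mview g) (a, q') (vunion tv btv)) /\
    b' = mkS (ops b) (cvd b) (tvupd (tview b) t btv) (mview b).

(* l.Acquire(n)_t (returns true) *)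
Definition acquire_step (l : nat) (n : nat) (t : thread) : stepRel :=
  fun g b g' b' =>
  exists w q q', ops b (w, q) /\
    (* w in {l.init_0, l.release_(n-1)}, with l.init_0 = l.release_0 *)
    (exists k, w = LRelease l k /\ n = k.+1) /\
    is_maxTS b (LO l) q /\ q < q' /\
    let bb := LAcquire l n t in
    let btv := vmerge (vupd (tview b t) (LO l) (bb, q')) (mview b (w, q)) in
    let gtv := vmerge (tview g t) (mview b (w, q)) in
    b' = mkS (addop (ops b) (bb, q')) (addop (cvd b) (w, q)) (tvupd (tview b) t btv)
             (mvupd (mview b) (bb, q') (vunion gtv btv)) /\
    g' = mkS (ops g) (cvd g) (tvupd (tview g) t gtv) (mview g).

Definition release_step (l : nat) (n : nat) (t : thread) : stepRel :=
  fun g b g' b' =>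
  exists k q q', ops b (LAcquire l k t, q) /\ n = k.+1 /\
    is_maxTS b (LO l) q /\ q < q' /\
    let r := LRelease l n in
    let btv := vupd (tview b t) (LO l) (r, q') in
    b' = mkS (addop (ops b) (r, q')) (cvd b) (tvupd (tview b) t btv)
             (mvupd (mview b) (r, q') (vunion (tview g t) btv)) /\
    g' = g.

Inductive lmeth := Acquire | Release.

Definition lstep (l : nat) (mm : lmeth) (n : nat) (t : thread) : stepRel :=
  match mm with
  | Acquire => acquire_step l n t
  | Release => release_step l n t
  end.

Definition step (l : nat) : stepRel :=
  fun g b g' b' => exists t : thread,
    (exists rel x n, write_step rel t x n g b g' b') \/
    (exists acq x n, read_step acq t x n g b g' b') \/
    (exists x m n, update_step t x m n g b g' b') \/
    (exists n, lstep l Acquire n t g b g' b') \/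
    (exists n, lstep l Release n t g b g' b').

Definition init_state (l : nat) (g b : cstate) : Prop :=
  exists iv : nat -> value,
    (forall e, ops g e <-> exists x, e = (Wr x (iv x), 0)) /\
    (forall e, ~ cvd g e) /\
    (forall t x, tview g t (CV x) = (Wr x (iv x), 0)) /\
    (forall x y, mview g (Wr x (iv x), 0) (CV y) = (Wr y (iv y), 0)) /\
    (forall x, mview g (Wr x (iv x), 0) (LO l) = (LInit l, 0)) /\
    (forall e, ops b e <-> e = (LInit l, 0)) /\
    (forall e, ~ cvd b e) /\
    (forall t, tview b t (LO l) = (LInit l, 0)) /\
    (forall y, mview b (LInit l, 0) (CV y) = (Wr y (iv y), 0)) /\
    mview b (LInit l, 0) (LO l) = (LInit l, 0).

Inductive reachable (l : nat) : cstate -> cstate -> Prop :=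
| reach_init g b : init_state l g b -> reachable l g b
| reach_step g b g' b' : reachable l g b -> step l g b g' b' -> reachable l g' b'.

Definition dview (V : view) (W : tsop -> Prop) (x : loc) (n : value) : Prop :=
  exists w, W w /\ var w.1 = x /\
    (forall w', W w' -> var w'.1 = x -> tst w' <= tst w) /\
    V x = w /\ wrval w.1 = Some n.

(* [x = n]_t  (on the client state) *)
Definition cval (g : cstate) (t : thread) (x : nat) (n : value) : Prop :=
  dview (tview g t) (fun e => ops g e /\ is_write e.1) (CV x) n.

(* <o.m>_t  (o = var a) *)
Definition pobs (b : cstate) (t : thread) (a : act) : Prop :=
  exists q, ops b (a, q) /\ tst (tview b t (var a)) <= q.

(* [o.m]_t *)
Definition dobs (b : cstate) (t : thread) (a : act) : Prop :=
  exists q, is_maxTS b (var a) q /\ tst (tview b t (var a)) = q /\ ops b (a, q).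

(* <o.m>[y = v]_t *)
Definition cobs (g b : cstate) (t : thread) (a : act) (y : nat) (v : value) : Prop :=
  is_sync a /\
  forall q, ops b (a, q) -> tst (tview b t (var a)) <= q ->
    dview (mview b (a, q)) (ops g) (CV y) v.

Definition hidden (b : cstate) (a : act) : Prop :=
  (exists q, ops b (a, q)) /\ forall q, ops b (a, q) -> cvd b (a, q).

Definition hoare (l : nat) (P : cstate -> cstate -> Prop) (S : stepRel)
    (Q : cstate -> cstate -> Prop) : Prop :=
  forall g b g' b', reachable l g b -> P g b -> S g b g' b' -> Q g' b'.

(* Main.v *)
Require Import Defs.
From mathcomp Require Import all_boot all_order all_algebra.
Set Implicit Arguments. Unset Strict Implicit. Unset Printing Implicit Defensive.
Import Order.TTheory GRing.Theory Num.Theory.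
Local Open Scope ring_scope.

Definition lidx (a : act) : nat :=
  match a with LAcquire _ n _ => n | LRelease _ n => n | _ => 0%N end.

Record Inv (l : nat) (g b : cstate) : Prop := {
 i0 : forall e, ops b e -> var e.1 = LO l;
 i1 : forall a q a' q', ops b (a,q) -> ops b (a',q') -> (lidx a < lidx a')%N -> q < q';
 i2 : forall a q, cvd b (a,q) -> exists a' q', ops b (a',q') /\ lidx a' = (lidx a).+1;
 i3 : forall e, ops b e -> tst (mview b e (LO l)) <= tst e;
 i4 : forall t, ops b (tview b t (LO l));
 i5 : forall e, ops g e -> ops b (mview g e (LO l));
 i6 : forall t y, ops g (tview g t (CV y)) /\ var (tview g t (CV y)).1 = CV y;
 i7 : forall e e', ops g e -> ops g e' -> var e.1 = var e'.1 -> tst e = tst e' -> e = e';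
 i8 : forall e, ops g e -> is_write e.1;
 i9 : forall e y, ops g e -> ops g (mview g e (CV y)) /\ var (mview g e (CV y)).1 = CV y;
 i10 : forall e y, ops b e -> ops g (mview b e (CV y)) /\ var (mview b e (CV y)).1 = CV y }.

Lemma vmerge_or (V1 V2 : view) y : vmerge V1 V2 y = V1 y \/ vmerge V1 V2 y = V2 y.
Proof. rewrite /vmerge; case: ifP; auto. Qed.

Lemma maxTS_le b o q a q0 : is_maxTS b o q -> ops b (a,q0) -> var a = o -> q0 <= q.
Proof. by move=> [_ H] Ho Hv; apply: H Ho Hv. Qed.

Lemma maxTS_uniq b o q1 q2 : is_maxTS b o q1 -> is_maxTS b o q2 -> q1 = q2.
Proof.
move=> [[a1 [Hv1 Ho1]] H1] [[a2 [Hv2 Ho2]] H2]; apply: le_anti.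
by rewrite (H2 _ _ Ho1 Hv1) (H1 _ _ Ho2 Hv2).
Qed.

Lemma fresh_ne g q q' e : fresh g q q' -> ops g e -> tst e <> q'.
Proof.
move=> [Hqq' Hf] He Heq; have := Hf e He; rewrite Heq Hqq' => /(_ isT).
by rewrite ltxx.
Qed.

Lemma inv_init l g b : init_state l g b -> Inv l g b.
Proof.
move=> [iv [Hog [Hcg [Htg [Hmgc [Hmgl [Hob [Hcb [Htb [Hmbc Hmbl]]]]]]]]]].
constructor.
- by move=> e /Hob ->.
- by move=> a q a' q' /Hob [-> _] /Hob [-> _]; rewrite ltnn.
- by move=> a q /Hcb.
- by move=> e /Hob ->; rewrite Hmbl.
- by move=> t0; rewrite Htb; apply/Hob.
- by move=> e /Hog [y ->]; rewrite Hmgl; apply/Hob.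
- by move=> t0 y; rewrite Htg; split => //; apply/Hog; exists y.
- move=> e e' /Hog [y ->] /Hog [y' ->] /= [->] _ //.
- by move=> e /Hog [y ->].
- by move=> e y /Hog [z ->]; rewrite Hmgc; split => //; apply/Hog; exists y.
- by move=> e y /Hob ->; rewrite Hmbc; split => //; apply/Hog; exists y.
Qed.

Lemma tvupd_eq (tv : thread -> view) t V : tvupd tv t V t = V.
Proof. by rewrite /tvupd eqxx. Qed.
Lemma tvupd_neq (tv : thread -> view) t t0 V : t0 <> t -> tvupd tv t V t0 = tv t0.
Proof. by rewrite /tvupd; case: eqP. Qed.

Lemma inv_write l g b g' b' rel t x n :
  Inv l g b -> write_step rel t x n g b g' b' -> Inv l g' b'.
Proof.
move=> I [w [q [q' [Hobs [Hncv [Hfr [-> ->]]]]]]].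
set a := (if rel then WrR x n else Wr x n).
have Hva : var a = CV x by rewrite /a; case: (rel).
have Hwa : is_write a by rewrite /a; case: (rel).
have Htv : forall y, let tv := vupd (tview g t) (CV x) (a, q') in
   addop (ops g) (a,q') (tv (CV y)) /\ var (tv (CV y)).1 = CV y.
  move=> y /=; rewrite /vupd; case: eqP => [-> | _]; first by split; [right|].
  by have [? ?] := i6 I t y; split => //; left.
case: I => I0 I1 I2 I3 I4 I5 I6 I7 I8 I9 I10.
constructor => //=.
- move=> e He; rewrite /mvupd; case: eqP => Hk /=; first exact: I4.
  by case: He => [He|Hek]; [apply: I5|].
- move=> t0 y; case: (eqVneq t0 t) => [->|Hne]; first by rewrite tvupd_eq; apply: Htv.
  rewrite tvupd_neq; last by apply/eqP.
  by have [? ?] := I6 t0 y; split => //; left.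
- move=> e e' [He|->] [He'|->] //.
  + exact: I7.
  + by move=> _ Ht; case: (fresh_ne Hfr He Ht).
  + by move=> _ Ht; case: (fresh_ne Hfr He' (esym Ht)).
- by move=> e [He|->]; [apply: I8|].
- move=> e y He; rewrite /mvupd; case: eqP => Hk /=; first exact: Htv.
  case: He => [He|Hek] //.
  by have [? ?] := I9 e y He; split => //; left.
- by move=> e y He; have [? ?] := I10 e y He; split => //; left.
Qed.

Lemma inv_read l g b g' b' acq t x n :
  Inv l g b -> read_step acq t x n g b g' b' -> Inv l g' b'.
Proof.
move=> I [w [q [[Hwq [Hvw _]] [_ [-> ->]]]]].
case: I => I0 I1 I2 I3 I4 I5 I6 I7 I8 I9 I10.
constructor => //=.
- move=> t0; case: (eqVneq t0 t) => [->|Hne]; last by rewrite tvupd_neq //; apply/eqP.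
  rewrite tvupd_eq; case: ifP => _ //.
  by case: (vmerge_or (tview b t) (mview g (w,q)) (LO l)) => ->; [apply: I4|apply: I5].
- move=> t0 y; case: (eqVneq t0 t) => [->|Hne]; last by rewrite tvupd_neq //; apply/eqP.
  rewrite tvupd_eq.
  have H0 : forall V, V = vupd (tview g t) (CV x) (w, q) ->
      ops g (V (CV y)) /\ var (V (CV y)).1 = CV y.
    move=> V ->; rewrite /vupd; case: eqP => [->|_] //.
  case: ifP => _; last exact: H0.
  case: (vmerge_or (vupd (tview g t) (CV x) (w, q)) (mview g (w,q)) (CV y)) => ->.
  + exact: H0.
  + exact: I9.
Qed.

Lemma inv_update l g b g' b' t x m n :
  Inv l g b -> update_step t x m n g b g' b' -> Inv l g' b'.
Proof.
move=> I [w [q [q' [[Hwq [Hvw _]] [_ [_ [Hfr [-> ->]]]]]]]].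
case: I => I0 I1 I2 I3 I4 I5 I6 I7 I8 I9 I10.
set a := Upd x m n.
set tv0 := (if is_releasing w then vmerge (tview g t) (mview g (w, q)) else tview g t).
set btv := (if is_releasing w then vmerge (tview b t) (mview g (w, q)) else tview b t).
have Hbtv : ops b (btv (LO l)).
  rewrite /btv; case: ifP => _ //.
  by case: (vmerge_or (tview b t) (mview g (w,q)) (LO l)) => ->; [apply: I4|apply: I5].
have Htv : forall y, addop (ops g) (a,q') (vupd tv0 (CV x) (a, q') (CV y)) /\
    var (vupd tv0 (CV x) (a, q') (CV y)).1 = CV y.
  move=> y; rewrite /vupd; case: eqP => [-> | _]; first by split; [right|].
  suff [? ?] : ops g (tv0 (CV y)) /\ var (tv0 (CV y)).1 = CV y by split => //; left.
  rewrite /tv0; case: ifP => _; last exact: I6.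
  by case: (vmerge_or (tview g t) (mview g (w,q)) (CV y)) => ->; [apply: I6|apply: I9].
constructor => //=.
- move=> t0; case: (eqVneq t0 t) => [->|Hne]; last by rewrite tvupd_neq //; apply/eqP.
  by rewrite tvupd_eq.
- move=> e He; rewrite /mvupd; case: eqP => Hk /=; first exact: Hbtv.
  by case: He => [He|Hek]; [apply: I5|].
- move=> t0 y; case: (eqVneq t0 t) => [->|Hne]; first by rewrite tvupd_eq; apply: Htv.
  rewrite tvupd_neq; last by apply/eqP.
  by have [? ?] := I6 t0 y; split => //; left.
- move=> e e' [He|->] [He'|->] //.
  + exact: I7.
  + by move=> _ Ht; case: (fresh_ne Hfr He Ht).
  + by move=> _ Ht; case: (fresh_ne Hfr He' (esym Ht)).
- by move=> e [He|->]; [apply: I8|].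
- move=> e y He; rewrite /mvupd; case: eqP => Hk /=; first exact: Htv.
  case: He => [He|Hek] //.
  by have [? ?] := I9 e y He; split => //; left.
- by move=> e y He; have [? ?] := I10 e y He; split => //; left.
Qed.

Lemma lidx_le l g b k w q a q0 : Inv l g b -> ops b (w,q) -> lidx w = k ->
  is_maxTS b (LO l) q -> ops b (a, q0) -> (lidx a <= k)%N.
Proof.
move=> I Hw Hk Hmax Ha; rewrite leqNgt; apply/negP => Hlt.
have H1 : q < q0 by apply: (i1 I Hw Ha); rewrite Hk.
have H2 : q0 <= q by apply: (maxTS_le Hmax Ha (i0 I Ha)).
by have := lt_le_trans H1 H2; rewrite ltxx.
Qed.

Lemma inv_acquire l g b g' b' n t :
  Inv l g b -> acquire_step l n t g b g' b' -> Inv l g' b'.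
Proof.
move=> I [w [q [q' [Hwq [[k [Hw Hn]] [Hmax [Hlt [-> ->]]]]]]]].
subst w n.
have Hle := lidx_le I Hwq erefl Hmax.
case: I => I0 I1 I2 I3 I4 I5 I6 I7 I8 I9 I10.
set bb := LAcquire l k.+1 t.
set btv := vmerge (vupd (tview b t) (LO l) (bb,q')) (mview b (LRelease l k, q)).
set gtv := vmerge (tview g t) (mview b (LRelease l k, q)).
have HbtvL : btv (LO l) = (bb,q').
  rewrite /btv /vmerge /vupd eqxx ifT //=.
  exact: le_trans (I3 _ Hwq) (ltW Hlt).
have Hgtv : forall y, ops g (gtv (CV y)) /\ var (gtv (CV y)).1 = CV y.
  by move=> y; rewrite /gtv; case: (vmerge_or (tview g t) (mview b (LRelease l k, q)) (CV y)) => ->;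
    [apply: I6|apply: I10].
constructor => //=.
- by move=> e [He|->]; [apply: I0|].
- move=> a1 q1 a2 q2 [H1|[-> ->]] [H2|[-> ->]] Hl.
  + exact: I1 H1 H2 Hl.
  + exact: le_lt_trans (maxTS_le Hmax H1 (I0 _ H1)) Hlt.
  + by move: (Hle _ _ H2); rewrite leqNgt (ltn_trans (ltnSn k) Hl).
  + by rewrite ltnn in Hl.
- move=> a0 q0 [Hc|[-> _]].
  + by have [a' [q'' [? ?]]] := I2 _ _ Hc; exists a', q''; split => //; left.
  + by exists bb, q'; split => //; right.
- move=> e He; rewrite /mvupd; case: eqP => Hk /=; first by rewrite Hk HbtvL.
  by case: He => [He|Hek] //; apply: I3.
- move=> t0; case: (eqVneq t0 t) => [->|Hne]; first by rewrite tvupd_eq HbtvL; right.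
  by rewrite tvupd_neq; [left|apply/eqP].
- by move=> e He; left; apply: I5.
- move=> t0 y; case: (eqVneq t0 t) => [->|Hne]; first by rewrite tvupd_eq.
  by rewrite tvupd_neq; [|apply/eqP].
- move=> e y He; rewrite /mvupd; case: eqP => Hk /=; first exact: Hgtv.
  by case: He => [He|Hek] //; apply: I10.
Qed.

Lemma inv_release l g b g' b' n t :
  Inv l g b -> release_step l n t g b g' b' -> Inv l g' b'.
Proof.
move=> I [k [q [q' [Hwq [Hn [Hmax [Hlt [-> ->]]]]]]]].
subst n.
have Hle := lidx_le I Hwq erefl Hmax.
case: I => I0 I1 I2 I3 I4 I5 I6 I7 I8 I9 I10.
set r := LRelease l k.+1.
set btv := vupd (tview b t) (LO l) (r,q').
have HbtvL : btv (LO l) = (r,q') by rewrite /btv /vupd eqxx.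
constructor => //=.
- by move=> e [He|->]; [apply: I0|].
- move=> a1 q1 a2 q2 [H1|[-> ->]] [H2|[-> ->]] Hl.
  + exact: I1 H1 H2 Hl.
  + exact: le_lt_trans (maxTS_le Hmax H1 (I0 _ H1)) Hlt.
  + by move: (Hle _ _ H2); rewrite leqNgt (ltn_trans (ltnSn k) Hl).
  + by rewrite ltnn in Hl.
- by move=> a0 q0 Hc; have [a' [q'' [? ?]]] := I2 _ _ Hc; exists a', q''; split => //; left.
- move=> e He; rewrite /mvupd; case: eqP => Hk /=; first by rewrite Hk HbtvL.
  by case: He => [He|Hek] //; apply: I3.
- move=> t0; case: (eqVneq t0 t) => [->|Hne]; first by rewrite tvupd_eq HbtvL; right.
  by rewrite tvupd_neq; [left|apply/eqP].
- by move=> e He; left; apply: I5.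
- move=> e y He; rewrite /mvupd; case: eqP => Hk /=; first exact: I6.
  by case: He => [He|Hek] //; apply: I10.
Qed.

Lemma inv_reach l g b : reachable l g b -> Inv l g b.
Proof.
elim => [g0 b0 /inv_init //|g0 b0 g1 b1 _ I [t0 H]].
case: H => [[rel [y [m Hs]]]|[[acq [y [m Hs]]]|[[y [m1 [m2 Hs]]]|[[m Hs]|[m Hs]]]]].
- exact: inv_write I Hs.
- exact: inv_read I Hs.
- exact: inv_update I Hs.
- exact: inv_acquire I Hs.
- exact: inv_release I Hs.
Qed.

Theorem mainTheorem1 (l : nat) (t t' : thread) (x : nat) (u v n : value)
    (mm : lmeth) :
  t <> t' ->
  (* (1) *)
  hoare l (fun _ b => hidden b (LRelease l u))
          (acquire_step l v t)
          (fun _ _ => (u.+1 < v)%N) /\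
  (* (2) *)
  hoare l (fun _ b => hidden b (LRelease l u))
          (lstep l mm v t)
          (fun _ b => hidden b (LRelease l u)) /\
  (* (3) *)
  hoare l (fun _ b => dobs b t (LRelease l u))
          (acquire_step l v t)
          (fun _ b => dobs b t (LAcquire l u.+1 t)) /\
  (* (4) *)
  hoare l (fun g _ => cval g t x u)
          (lstep l mm v t')
          (fun g _ => cval g t x u) /\
  (* (5) *)
  hoare l (fun g b => cobs g b t (LRelease l u) x n)
          (acquire_step l v t)
          (fun g _ => v = u.+1 -> cval g t x n) /\
  (* (6) *)
  hoare l (fun g b => ~ pobs b t' (LRelease l u) /\ cval g t x v)
          (release_step l u t)
          (fun g b => cobs g b t' (LRelease l u) x v).
Proof.
move=> Htt'.
split.
  move=> g b g' b' /inv_reach I [[qu Hqu] Hcv].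
  move=> [w [q [q' [Hwq [[k [Hw Hn]] [Hmax _]]]]]]; subst w v.
  have [a' [q'' [Ho' Hidx]]] := i2 I (Hcv _ Hqu).
  rewrite ltnS ltnNge; apply/negP => Hk.
  have H1 : q < q'' by apply: (i1 I Hwq Ho'); rewrite Hidx /= ltnS.
  have H2 := maxTS_le Hmax Ho' (i0 I Ho').
  by have := lt_le_trans H1 H2; rewrite ltxx.
split.
  move=> g b g' b' /inv_reach I [[qu Hqu] Hcv]; case: mm => /=.
    move=> [w [q [q' [Hwq [[k [Hw Hn]] [Hmax [Hlt [-> _]]]]]]]].
    split; first by exists qu; left.
    by move=> q0 [H|[]] //; left; apply: Hcv.
  move=> [k [q [q' [Hwq [Hn [Hmax [Hlt [-> _]]]]]]]].
  split; first by exists qu; left.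
  move=> q0 [H|[Hu Hq]]; first by apply: Hcv.
  subst v u.
  have [a' [q'' [Ho' Hidx]]] := i2 I (Hcv _ Hqu).
  have H1 : q < q'' by apply: (i1 I Hwq Ho'); rewrite Hidx /= ltnS.
  have H2 := maxTS_le Hmax Ho' (i0 I Ho').
  by have := lt_le_trans H1 H2; rewrite ltxx.
split.
  move=> g b g' b' /inv_reach I [q0 [Hmax0 [_ Hops0]]].
  move=> [w [q [q' [Hwq [[k [Hw Hn]] [Hmax [Hlt [-> _]]]]]]]]; subst w v.
  have Eq := maxTS_uniq Hmax0 Hmax; subst q0.
  have Euk : u = k.
    case: (ltngtP u k) => // H.
    - by have := i1 I Hops0 Hwq H; rewrite ltxx.
    - by have := i1 I Hwq Hops0 H; rewrite ltxx.
  subst k.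
  exists q'; split; last split.
  - split; first by exists (LAcquire l u.+1 t); split => //; right.
    move=> a q0 [H|[_ ->]] Hv //.
    exact: le_trans (maxTS_le Hmax H Hv) (ltW Hlt).
  - rewrite /= tvupd_eq /vmerge /vupd eqxx ifT //=.
    exact: le_trans (i3 I Hwq) (ltW Hlt).
  - by right.
split.
  move=> g b g' b' _ Hc; case: mm => /=.
    move=> [w [q [q' [_ [_ [_ [_ [_ ->]]]]]]]].
    by rewrite /cval /= tvupd_neq.
  by move=> [k [q [q' [_ [_ [_ [_ [_ ->]]]]]]]].
split.
  move=> g b g' b' /inv_reach I [_ Hc].
  move=> [w [q [q' [Hwq [[k [Hw Hn]] [Hmax [Hlt [_ ->]]]]]]]]; subst w v.
  move=> [Eku]; subst k.
  have Hle : tst (tview b t (LO l)) <= q.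
    have H4 := i4 I t; have H0 := i0 I H4; move: H4 H0.
    case: (tview b t (LO l)) => a0 q0 H4 H0; exact: maxTS_le Hmax H4 H0.
  have [w0 [Hw0 [Hv0 [Hmx [Heq Hval]]]]] := Hc q Hwq Hle.
  exists w0; split; first by split => //; apply: (i8 I).
  split => //; split; first by move=> w' [Hw' _]; apply: Hmx.
  split => //.
  rewrite /= tvupd_eq /vmerge Heq; case: ifP => // Hl.
  have [Ho Hv] := i6 I t x.
  apply: (i7 I) => //; first by rewrite Hv Hv0.
  by apply: le_anti; rewrite Hl Hmx.
move=> g b g' b' /inv_reach I [Hnp Hc].
move=> [k [q [q' [Hacq [Hu [Hmax [Hlt [-> ->]]]]]]]].
split => //.
move=> q0 /= [Hold|[Hq]] Hle.
  case: Hnp; exists q0; split => //.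
  by move: Hle; rewrite tvupd_neq //; apply/nesym.
subst q0; rewrite /mvupd eqxx /=.
have [w0 [[Hw0 _] [Hv0 [Hmx [Heq Hval]]]]] := Hc.
exists w0; split => //; split => //; split; last by split.
by move=> w' Hw' Hv'; apply: Hmx => //; split => //; apply: (i8 I).
Qed.
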